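(* Let $k\ge r\ge 3$ and $t\ge 0$ be integers and let $\pi\in\mathbb{C}(k,r)$ be a partition in which both $2t+1$ and $2t+2$ occur as parts. Then every part equal to $2t+2$ has a mark in $GG(\pi)$ strictly greater than the mark of the part $2t+1$ in $GG(\pi)$.
   Context: A partition $\pi=(\pi_1,\dots,\pi_\ell)$ is a finite non-increasing sequence of positive integers. Göllnitz–Gordon marking: $GG(\pi)$ assigns a positive integer (mark) to each part, processing the parts from smallest to largest ($\pi_\ell,\dots,\pi_1$); $\pi_i$ receives the smallest positive integer different from the marks of all parts $\pi_g$ with $g>i$ and $\pi_i-\pi_g\le 2$, where $\pi_i-\pi_g<2$ is required when $\pi_i$ is odd. $\mathbb{C}(k,r)$: the set of partitions $\pi$ such that (i) no odd part is repeated; (ii) $\pi_i\ge\pi_{i+k-1}+2$ for $1\le i\le\ell-k+1$, with strict inequality if $\pi_i$ is even; (iii) at most $r-1$ parts are $\le 2$. (In particular $2t+1$ occurs at most once, so its mark is well defined.) *)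

(* Defs.v *)
From mathcomp Require Import all_boot.
Set Implicit Arguments. Unset Strict Implicit. Unset Printing Implicit Defensive.

(* A partition is a finite non-increasing sequence of positive integers,
   represented as the list [pi_1; ...; pi_l] (index i in the list is pi_(i+1)). *)
Definition is_partition (p : seq nat) : bool :=
  sorted geq p && all (fun x => 0 < x) p.

(* Smallest positive integer not occurring in L (it lies in 1..size L + 1). *)
Definition mex1 (L : seq nat) : nat :=
  head 0 [seq n <- iota 1 (size L).+1 | n \notin L].

(* Goellnitz-Gordon marking, processing parts from the smallest (last) to the
   largest (first).  [GG p] is the list of marks aligned with [p]. *)
Fixpoint GG (p : seq nat) : seq nat :=
  match p with
  | [::] => [::]
  | x :: p' =>
      let m' := GG p' in
      mex1 [seq yz.2 | yz <- zip p' m' &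
              (x - yz.1 <= 2) && (odd x ==> (x - yz.1 < 2))] :: m'
  end.

(* The set C(k, r). Indices are 0-based: condition (ii) for
   1 <= i <= l-k+1 becomes i + k - 1 < l for 0-based i. *)
Definition in_C (k r : nat) (p : seq nat) : Prop :=
  [/\ is_partition p,
      (forall x, odd x -> count_mem x p <= 1),
      (forall i, i + k - 1 < size p ->
         if odd (nth 0 p i) then nth 0 p (i + k - 1) + 2 <= nth 0 p i
         else nth 0 p (i + k - 1) + 2 < nth 0 p i)
    & count (fun x => x <= 2) p <= r - 1].

(* Main.v *)
Require Import Defs.
From mathcomp Require Import all_boot.
From mathcomp Require Import zify.

Definition cnd (x y : nat) : bool := (x - y <= 2) && (odd x ==> (x - y < 2)).

Lemma mex1P (L : seq nat) :
  [/\ 0 < mex1 L, mex1 L \notin L & forall n, 0 < n < mex1 L -> n \in L].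
Proof.
rewrite /mex1.
set s := [seq n <- iota 1 (size L).+1 | n \notin L].
have ne : s != [::].
  apply/negP => /eqP E.
  have : size (iota 1 (size L).+1) <= size L.
    apply: uniq_leq_size; first exact: iota_uniq.
    move=> x Hx; apply/negPn/negP => Hn.
    have : x \in s by rewrite mem_filter Hn Hx.
    by rewrite E.
  by rewrite size_iota ltnn.
have srt : sorted ltn s by apply: sorted_filter; [exact: ltn_trans| exact: iota_ltn_sorted].
case Es : s ne srt => [//|a s'] _ /= srt.
have as_ : a \in s by rewrite Es mem_head.
move: (as_); rewrite mem_filter mem_iota => /andP [aL /andP [a1 a2]].
split => //.
move=> n /andP [n0 na]; apply/negPn/negP => nL.
have : n \in s by rewrite mem_filter nL mem_iota n0 /=; lia.
rewrite Es inE => /orP [/eqP E|ns']; first lia.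
have := order_path_min ltn_trans srt.
move/allP/(_ _ ns'); lia.
Qed.

Lemma size_GG p : size (GG p) = size p.
Proof. by elim: p => //= x p ->. Qed.

Lemma mem_zip_nth (s t : seq nat) a b : size s = size t ->
  (a, b) \in zip s t <-> exists l, l < size s /\ nth 0 s l = a /\ nth 0 t l = b.
Proof.
elim: s t => [|x s IH] [|y t] //=.
- by split => // [[l []]].
- move=> [E]; rewrite inE; split.
  + case/orP => [/eqP [-> ->]|/IH]; first by exists 0.
    by move=> /(_ E) [l [H1 [H2 H3]]]; exists l.+1.
  + case=> [[|l]] /= [H1 [H2 H3]]; first by rewrite H2 H3 eqxx.
    apply/orP; right; apply/IH => //; by exists l.
Qed.

Lemma GG_nth p i : i < size p -> exists L, nth 0 (GG p) i = mex1 L /\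
  forall v, v \in L <-> exists l, [/\ i < l < size p, cnd (nth 0 p i) (nth 0 p l)
      & v = nth 0 (GG p) l].
Proof.
elim: p i => [|x p IH] [|i] //= Hi.
- eexists; split; first reflexivity.
  move=> v; split.
  + case/mapP => [[a b]]; rewrite mem_filter /= => /andP [c /mem_zip_nth].
    move=> /(_ (esym (size_GG p))) [l [H1 [H2 H3]]] ->.
    exists l.+1; split => //; try lia.
    by rewrite /= /cnd H2.
  + case=> [[|l]] [H1 H2 H3] //.
    apply/mapP; exists (nth 0 p l, nth 0 (GG p) l) => //.
    rewrite mem_filter; apply/andP; split; first exact: H2.
    apply/mem_zip_nth; first by rewrite size_GG.
    by exists l; split => //; lia.
- have [L [E HL]] := IH i Hi.
  exists L; split => // v; rewrite HL; split.
  + case=> l [H1 H2 H3]; exists l.+1; split => //; lia.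
  + case=> [[|l]] [H1 H2 H3] //; exists l; split => //; lia.
Qed.

Theorem lemma2p10 (k r t : nat) (p : seq nat) :
  3 <= r -> r <= k -> in_C k r p ->
  t.*2.+1 \in p -> t.*2.+2 \in p ->
  forall i, i < size p -> nth 0 p i = t.*2.+2 ->
    nth 0 (GG p) (index t.*2.+1 p) < nth 0 (GG p) i.
Proof.
move=> _ _ [/andP [srt _] _ _ _] jin _ i isz pi.
set j := index t.*2.+1 p.
have jsz : j < size p by rewrite index_mem.
have pj : nth 0 p j = t.*2.+1 by exact: nth_index.
have ij : i < j.
  rewrite ltnNge; apply/negP => ji.
  have := sorted_leq_nth (fun y x z (h1 : geq x y) (h2 : geq y z) => leq_trans h2 h1) (fun x => leqnn x) 0 srt j i jsz isz ji.
  by rewrite /= pi pj ltnn.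
have [Lj [Ej HLj]] := @GG_nth p j jsz.
have [Li [Ei HLi]] := @GG_nth p i isz.
rewrite Ej Ei.
have [j0 jn jall] := mex1P Lj.
have [i0 inn iall] := mex1P Li.
have sub : forall n, 0 < n <= mex1 Lj -> n \in Li.
  move=> n /andP [n0]; rewrite leq_eqVlt => /orP [/eqP nE|nlt].
  - apply/HLi; exists j; split => //; first lia.
    + by rewrite pi pj /cnd /=; apply/andP; split; [lia| rewrite odd_double].
    + by rewrite nE Ej.
  - have /HLj [l [H1 H2 H3]] := jall n (introT andP (conj n0 nlt)).
    apply/HLi; exists l; split => //; first lia.
    move: H2; rewrite pi pj /cnd /= odd_double /=.
    move=> /andP [_ H]; rewrite andbT; lia.
rewrite ltnNge; apply/negP => le.
by have := sub _ (introT andP (conj i0 le)); rewrite (negbTE inn).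
Qed.
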